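(* Let $b,c_1,c_2$ be positive integers and let $N=b+c_1+c_2$. Let $R$ be the map that takes a tableau $T\in\mathrm{SET}(\mathcal{L}^{c_1,c_2}_b)$, replaces each entry $i$ by $N+1-i$, and rotates the result by 180 degrees. Then $R$ is a poset isomorphism from $\mathrm{SET}$ of the right lobster $\mathcal{L}^{c_1,c_2}_b$ (associated to the triple $(b,c_1,c_2)$) to $\mathrm{SET}$ of the left lobster associated to the triple $(b,c_2,c_1)$.
   Context: Rows of skew diagrams are numbered from the bottom. For positive integers $b,c_1,c_2$, the right lobster $\mathcal{L}^{c_1,c_2}_b$ is the skew diagram $\alpha/\beta$ with $\alpha=(b+1+c_2,b+1,b+1+c_1)$, $\beta=(b+1,1,b+1)$: a bottom row of $c_2$ cells in columns $b+2,\ldots,b+1+c_2$, a middle row (body) of $b$ cells in columns $2,\ldots,b+1$, and a top row of $c_1$ cells in columns $b+2,\ldots,b+1+c_1$. The left lobster associated to a triple $(b,c_1,c_2)$ is the three-row skew diagram whose top row has $c_1$ cells and bottom row has $c_2$ cells, both right-justified ending in a common column $m$ (with $m=\max(c_1,c_2)$), and whose middle row (body) has $b$ cells in columns $m+1,\ldots,m+b$; it is the 180-degree rotation of the right lobster with top row $c_2$ and bottom row $c_1$. $\mathrm{SET}$ of a skew shape with $N$ cells is the set of bijective fillings with $1,\ldots,N$ whose rows increase left to right and columns increase bottom to top. For $1\le i\le N-1$, $\pi_i(T)=T$ if $i+1$ is in a strictly higher row than $i$, $\pi_i(T)=s_i(T)$ (swap $i$ and $i+1$) if $i+1$ is in a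 strictly lower row than $i$, and $\pi_i(T)=0$ otherwise; the poset order is $T\le T'$ iff $T'$ is obtained from $T$ by a sequence of operators $\pi_i$ (all intermediate results nonzero). *)

(* Defs.v *)
From Stdlib Require Import Relations.
From mathcomp Require Import all_boot.

Set Implicit Arguments.
Unset Strict Implicit.
Unset Printing Implicit Defensive.

(* A cell is (row, column); rows are numbered from the bottom, starting at 1. *)
Definition cell := (nat * nat)%type.

Definition shape := seq cell.

(* The skew diagram alpha/beta, row r (from the bottom, r = 1, 2, ...) being
   the cells in columns beta_r + 1, ..., alpha_r. *)
Definition skew (alpha beta : seq nat) : shape :=
  flatten [seq [seq (r.+1, c) | c <- iota (nth 0 beta r).+1 (nth 0 alpha r - nth 0 beta r)]
          | r <- iota 0 (size alpha)].

Definition right_lobster (b c1 c2 : nat) : shape :=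
  skew [:: b + 1 + c2; b + 1; b + 1 + c1] [:: b + 1; 1; b + 1].

Definition left_lobster (b c1 c2 : nat) : shape :=
  let m := maxn c1 c2 in
  [seq (1, c) | c <- iota (m - c2).+1 c2] ++
  [seq (2, c) | c <- iota m.+1 b] ++
  [seq (3, c) | c <- iota (m - c1).+1 c1].

Definition filling := cell -> nat.

(* Standard (bijective) filling of D with 1..N (N = #cells): rows increase
   left to right, columns increase bottom to top; entries outside D are 0
   (so that a tableau is determined by its values on D). *)
Definition SET (D : shape) (T : filling) : Prop :=
  [/\ uniq D,
      forall x, x \notin D -> T x = 0,
      perm_eq (map T D) (iota 1 (size D)),
      (forall r c c', (r, c) \in D -> (r, c') \in D -> c < c' -> T (r, c) < T (r, c'))
    & (forall r r' c, (r, c) \in D -> (r', c) \in D -> r < r' -> T (r, c) < T (r', c))].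

Definition swap_entries (i : nat) (T : filling) : filling :=
  fun z => if T z == i then i.+1 else if T z == i.+1 then i else T z.

(* pi_step D T T' : T' = pi_i(T) for some 1 <= i <= N-1 with pi_i(T) nonzero:
   pi_i(T) = T if i+1 is in a strictly higher row than i,
   pi_i(T) = s_i(T) if i+1 is in a strictly lower row than i,
   pi_i(T) = 0 otherwise (no step). *)
Definition pi_step (D : shape) (T T' : filling) : Prop :=
  exists i x y, [/\ 1 <= i < size D, x \in D, y \in D, T x = i /\ T y = i.+1 &
    ((x.1 < y.1 /\ T' = T) \/ (y.1 < x.1 /\ T' = swap_entries i T))].

Definition SET_le (D : shape) : relation filling := clos_refl_trans filling (pi_step D).

(* The rotation
   (r, c) |-> (4 - r, max(c1,c2) + b + 2 - c) maps the cells of the right lobster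
   L_b^{c1,c2} onto those of the left lobster of (b, c2, c1). *)
Definition R_map (b c1 c2 : nat) (T : filling) : filling :=
  let N := b + c1 + c2 in
  fun x => if x \in left_lobster b c2 c1
           then N.+1 - T (4 - x.1, maxn c1 c2 + b + 2 - x.2)
           else 0.

(* Main.v *)
Require Import Defs.
From Stdlib Require Import Relations FunctionalExtensionality.
From mathcomp Require Import all_boot zify.
Set Implicit Arguments. Unset Strict Implicit.

Lemma mem_row (k a n r c : nat) : ((r, c) \in [seq (k, c) | c <- iota a n]) = (r == k) && (a <= c < a + n).
Proof.
apply/mapP/andP => [[c' ci [-> ->]]|[/eqP -> ci]]; first by rewrite -mem_iota.
by exists c; rewrite ?mem_iota.
Qed.

Lemma uniq_row (k a n : nat) : uniq [seq (k, c) | c <- iota a n].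
Proof. by rewrite map_inj_uniq ?iota_uniq // => x y []. Qed.

Lemma uniq3 (a1 n1 a2 n2 a3 n3 : nat) :
  uniq ([seq (1,c) | c <- iota a1 n1] ++ [seq (2,c) | c <- iota a2 n2] ++ [seq (3,c) | c <- iota a3 n3]).
Proof.
rewrite !cat_uniq !uniq_row /= !has_cat !negb_or.
by rewrite !andbT; repeat (apply/andP; split); apply/hasPn => z /mapP [c _ ->]; rewrite mem_row.
Qed.

Definition rot (M : nat) (x : cell) : cell := (4 - x.1, M - x.2).
Definition G (D : seq cell) (N M : nat) (T : filling) : filling :=
  fun x => if x \in D then N.+1 - T (rot M x) else 0.

Definition good (D D' : seq cell) (N M : nat) : Prop :=
  [/\ uniq D, uniq D', size D = N, size D' = N &
      [/\ (forall x, x \in D -> rot M x \in D'),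
      (forall x, x \in D' -> rot M x \in D)
    & (forall x, (x \in D) || (x \in D') -> 1 <= x.1 <= 3 /\ x.2 <= M)]].

Lemma good_sym D D' N M : good D D' N M -> good D' D N M.
Proof.
case=> u u' s s' [h h' hb]; split => //; split => // x Hx; apply: hb; by rewrite orbC.
Qed.

Lemma rotK M x : 1 <= x.1 <= 3 -> x.2 <= M -> rot M (rot M x) = x.
Proof. case: x => r c /= h1 h2; rewrite /rot /=; congr pair; lia. Qed.

Lemma rotKD D D' N M x : good D D' N M -> (x \in D) || (x \in D') -> rot M (rot M x) = x.
Proof. case=> _ _ _ _ [_ _ hb] Hx; have [] := hb x Hx; exact: rotK. Qed.

Lemma SET_bound D T x : SET D T -> x \in D -> 1 <= T x <= size D.
Proof.
case=> _ _ P _ _ xD.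
have : T x \in map T D := map_f T xD.
by rewrite (perm_mem P) mem_iota => /andP[h1 h2]; lia.
Qed.

Lemma step_map D D' N M T T' : good D D' N M ->
  pi_step D T T' -> pi_step D' (G D' N M T) (G D' N M T').
Proof.
move=> g; have [u u' s s' [h h' hb]] := g.
case=> i [[xr xc] [[yr yc] [/andP[i1 iN] xD yD [Tx Ty] H]]].
set x := (xr, xc) in xD Tx H *; set y := (yr, yc) in yD Ty H *.
have bx := hb x (introT orP (or_introl xD)).
have bY := hb y (introT orP (or_introl yD)).
have rxx := rotKD g (introT orP (or_introl xD)).
have ryy := rotKD g (introT orP (or_introl yD)).
rewrite /= in H bx bY.
exists (N - i), (rot M y), (rot M x); split.
- apply/andP; split; lia.
- exact: h.
- exact: h.
- rewrite /G (h _ xD) (h _ yD) rxx ryy Tx Ty; split; lia.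
- case: H => [[lt ->]|[lt ->]]; [left|right]; split.
  + rewrite /rot /=; lia.
  + done.
  + rewrite /rot /=; lia.
  + apply: functional_extensionality => z; rewrite /G /swap_entries.
    case: (z \in D').
    * set v := T (rot M z).
      repeat case: eqP => ? //=; try lia.
    * repeat case: eqP => ? //=; try lia.
Qed.

Lemma le_map D D' N M T T' : good D D' N M ->
  SET_le D T T' -> SET_le D' (G D' N M T) (G D' N M T').
Proof.
move=> g; elim => [? ? st|?|? ? ? _ h1 _ h2].
- apply: rt_step; exact: step_map st.
- exact: rt_refl.
- exact: rt_trans h1 h2.
Qed.

Lemma perm_rev N : perm_eq (map (fun v => N.+1 - v) (iota 1 N)) (iota 1 N).
Proof.
apply: uniq_perm; last first.
- move=> v; apply/mapP/idP => [[w wI ->]|vI].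
  + rewrite mem_iota in wI; rewrite mem_iota; lia.
  + rewrite mem_iota in vI; exists (N.+1 - v); rewrite ?mem_iota; lia.
- exact: iota_uniq.
- rewrite map_inj_in_uniq ?iota_uniq // => p q; rewrite !mem_iota => hp hq E; lia.
Qed.

Lemma SET_map D D' N M T : good D D' N M -> SET D T -> SET D' (G D' N M T).
Proof.
move=> g; have [u u' s s' [h h' hb]] := g.
move=> ST; have [_ z0 P rw cl] := ST.
split => //.
- by move=> x /negbTE xD; rewrite /G xD.
- have e : map (G D' N M T) D' = map (fun v => N.+1 - v) (map T (map (rot M) D')).
    rewrite -!map_comp; apply/eq_in_map => z zD /=; by rewrite /G zD.
  have p1 : perm_eq (map (rot M) D') D.
    apply: uniq_perm => //.
    + rewrite map_inj_in_uniq // => p q pD qD E.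
      by rewrite -(rotKD g (introT orP (or_intror pD))) E (rotKD g (introT orP (or_intror qD))).
    + move=> z; apply/mapP/idP => [[w wD ->]|zD]; first exact: h'.
      exists (rot M z); first exact: h.
      by rewrite (rotKD g (introT orP (or_introl zD))).
  rewrite e s'; apply: perm_trans (perm_rev N).
  apply: perm_map; rewrite -s; apply: perm_trans P; exact: perm_map.
- move=> r c c' x1 x2 lt.
  have b1 := hb _ (introT orP (or_intror x1)).
  have b2 := hb _ (introT orP (or_intror x2)).
  rewrite /G x1 x2.
  have y1 := h' _ x1; have y2 := h' _ x2.
  have t1 := SET_bound ST y1; have t2 := SET_bound ST y2.
  have := rw (4 - r) (M - c') (M - c) y2 y1.
  rewrite /rot /= in t1 t2 b1 b2 *; move=> H; have := H ltac:(lia); lia.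
- move=> r r' c x1 x2 lt.
  have b1 := hb _ (introT orP (or_intror x1)).
  have b2 := hb _ (introT orP (or_intror x2)).
  rewrite /G x1 x2.
  have y1 := h' _ x1; have y2 := h' _ x2.
  have t1 := SET_bound ST y1; have t2 := SET_bound ST y2.
  have := cl (4 - r') (4 - r) (M - c) y2 y1.
  rewrite /rot /= in t1 t2 b1 b2 *; move=> H; have := H ltac:(lia); lia.
Qed.

Lemma GK D D' N M T : good D D' N M -> SET D T -> G D N M (G D' N M T) = T.
Proof.
move=> g ST; have [u u' s s' [h h' hb]] := g.
apply: functional_extensionality => x; rewrite /G.
case: (boolP (x \in D)) => xD.
- rewrite (h _ xD) (rotKD g (introT orP (or_introl xD))).
  have := SET_bound ST xD; rewrite s; lia.
- by have [_ z0 _ _ _] := ST; rewrite z0.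
Qed.
Lemma mem_right b c1 c2 (r c : nat) : ((r,c) \in right_lobster b c1 c2) = [|| (r == 1) && (b+2 <= c < b+2+c2), (r==2) && (2 <= c < 2 + b) | (r==3) && (b+2 <= c < b+2+c1)].
Proof.
rewrite /right_lobster /skew /= !mem_cat !mem_row in_nil /=.
lia.
Qed.
Lemma mem_left b c1 c2 (r c : nat) : ((r,c) \in left_lobster b c1 c2) = [|| (r == 1) && (maxn c1 c2 - c2 < c <= maxn c1 c2), (r==2) && (maxn c1 c2 < c <= maxn c1 c2 + b) | (r==3) && (maxn c1 c2 - c1 < c <= maxn c1 c2)].
Proof.
rewrite /left_lobster !mem_cat !mem_row /=.
lia.
Qed.
Lemma size_right b c1 c2 : size (right_lobster b c1 c2) = b + c1 + c2.
Proof. rewrite /right_lobster /skew /= !size_cat !size_map !size_iota /=. lia. Qed.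
Lemma size_left b c1 c2 : size (left_lobster b c1 c2) = b + c1 + c2.
Proof. rewrite /left_lobster /= !size_cat !size_map !size_iota /=. lia. Qed.

Lemma good_lob b c1 c2 : good (right_lobster b c1 c2) (left_lobster b c2 c1) (b + c1 + c2) (maxn c1 c2 + b + 2).
Proof.
split.
- rewrite /right_lobster /skew /= cats0; exact: uniq3.
- exact: uniq3.
- exact: size_right.
- rewrite size_left; lia.
- split.
  + case=> r c; rewrite mem_right /rot /= mem_left; lia.
  + case=> r c; rewrite mem_left /rot /= mem_right; lia.
  + case=> r c; rewrite mem_right mem_left /=; lia.
Qed.

Theorem lemma5p3 (b c1 c2 : nat) (hb : 0 < b) (hc1 : 0 < c1) (hc2 : 0 < c2) :
  let D := right_lobster b c1 c2 in
  let D' := left_lobster b c2 c1 in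
  [/\ (forall T, SET D T -> SET D' (R_map b c1 c2 T)),
      (forall T1 T2, SET D T1 -> SET D T2 -> R_map b c1 c2 T1 = R_map b c1 c2 T2 -> T1 = T2),
      (forall T', SET D' T' -> exists2 T, SET D T & R_map b c1 c2 T = T')
    & (forall T1 T2, SET D T1 -> SET D T2 ->
         (SET_le D T1 T2 <-> SET_le D' (R_map b c1 c2 T1) (R_map b c1 c2 T2)))].
Proof.
move=> D D'.
have g := good_lob b c1 c2.
have g' := good_sym g.
have -> : R_map b c1 c2 = G D' (b + c1 + c2) (maxn c1 c2 + b + 2) by [].
split.
- move=> T; exact: SET_map g.
- move=> T1 T2 S1 S2 E.
  by rewrite -(GK g S1) -(GK g S2) E.
- move=> T' S'; exists (G D (b + c1 + c2) (maxn c1 c2 + b + 2) T').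
  + exact: SET_map g' S'.
  + exact: GK g' S'.
- move=> T1 T2 S1 S2; split; first exact: le_map g.
  move=> H; rewrite -(GK g S1) -(GK g S2); exact: le_map g' H.
Qed.
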